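(* Let $\alpha\in(0,1]$, let $G$ be a planar 3-tree with $n$ vertices, and let $T=T(G)$ be its tree of triangles with the weights, heavy nodes and hubs defined as in the context. If $\Delta_1,\Delta_2$ are two distinct heavy nodes of $T$ that are siblings (have the same parent), then both $\Delta_1$ and $\Delta_2$ are hubs.
   Context: A planar 3-tree $G$ is constructed by starting from a triangle and repeatedly inserting a new vertex $u$ into a triangular face $\Delta=v_1v_2v_3$ of the current plane graph, joining $u$ to $v_1,v_2,v_3$. This process is encoded by a rooted tree $T=T(G)$: its nodes are triangles of $G$, its root is the initial triangle, and when $u$ is inserted into the face $\Delta=v_1v_2v_3$ (which is currently a leaf of $T$), the node $\Delta$ receives three children, the triangles $v_1v_2u$, $v_1uv_3$ and $uv_2v_3$. For a node $\Delta$ of $T$, let $V_\Delta$ be the set of vertices of $G$ lying in the interior of $\Delta$ (equivalently, the vertices inserted at nodes of the subtree of $T$ rooted at $\Delta$), and let $\mathrm{weight}(\Delta)=|V_\Delta|$. A node is heavy if its weight is at least $n^\alpha$ and light otherwise. Hubs are defined top-down: the root of $T$ is a hub, and a non-root node $\Delta$ is a hub if $n^\alpha\le \mathrm{weight}(\Delta)\le \mathrm{weight}(\Delta')-n^\alpha$ for every hub $\Delta'$ that is an ancestor of $\Delta$. *)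

(* Defs.v *)
From Stdlib Require Import Reals List Arith Bool.
Import ListNotations.
Open Scope R_scope.

(* The tree of triangles T(G) of a planar 3-tree G.  A node is a triangle;
   a Leaf is a face of the final graph G, a Node is a triangle into which a
   vertex u was inserted, with its three children v1v2u, v1uv3, uv2v3. *)
Inductive tree : Type :=
| Leaf : tree
| Node : tree -> tree -> tree -> tree.

(* weight(Δ) = |V_Δ| = number of vertices inserted in the subtree at Δ *)
Fixpoint weight (t : tree) : nat :=
  match t with
  | Leaf => 0%nat
  | Node a b c => S (weight a + weight b + weight c)
  end.

(* number of vertices of G: the three vertices of the initial triangle
   plus all inserted vertices *)
Definition nverts (t : tree) : nat := (3 + weight t)%nat.

Definition child (t : tree) (i : nat) : option tree :=
  match t with
  | Leaf => None
  | Node a b c =>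
      match i with 0%nat => Some a | 1%nat => Some b | 2%nat => Some c | _ => None end
  end.

(* nodes of T are addressed by their path from the root *)
Fixpoint subtree_at (t : tree) (p : list nat) : option tree :=
  match p with
  | [] => Some t
  | i :: p' => match child t i with Some c => subtree_at c p' | None => None end
  end.

Definition thr (n : nat) (alpha : R) : R := Rpower (INR n) alpha.

Definition Rleb (x y : R) : bool := if Rle_dec x y then true else false.

Definition heavy (n : nat) (alpha : R) (s : tree) : Prop :=
  thr n alpha <= INR (weight s).

(* hub condition of a non-root node of weight w, given the list of weights
   of its hub ancestors *)
Definition hubcondb (n : nat) (alpha : R) (ancw : list nat) (w : nat) : bool :=
  (Rleb (thr n alpha) (INR w) &&
  forallb (fun w' => Rleb (INR w) (INR w' - thr n alpha)) ancw)%bool.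

(* top-down computation of hub status: t is the current node, isroot tells
   whether it is the root, ancw = weights of the hubs that are proper
   ancestors of the current node; returns the hub status of the node at
   relative path p *)
Fixpoint hub_aux (n : nat) (alpha : R) (t : tree) (isroot : bool)
    (ancw : list nat) (p : list nat) : bool :=
  let h := (isroot || hubcondb n alpha ancw (weight t))%bool in
  match p with
  | [] => h
  | i :: p' =>
      match child t i with
      | Some c => hub_aux n alpha c false (if h then weight t :: ancw else ancw) p'
      | None => false
      end
  end.

Definition is_hub (alpha : R) (t : tree) (p : list nat) : Prop :=
  hub_aux (nverts t) alpha t true [] p = true.

(* Main.v *)
Require Import Defs.
From Stdlib Require Import Reals List Arith.
Import ListNotations.
Open Scope R_scope.
From Stdlib Require Import Lia Lra.

Lemma child_two (P D1 D2 : tree) (i j : nat) :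
  i <> j -> child P i = Some D1 -> child P j = Some D2 ->
  (weight D1 + weight D2 < weight P)%nat.
Proof.
  destruct P as [|a b c]; simpl; [discriminate|].
  intros Hij H1 H2.
  destruct i as [|[|[|i]]]; destruct j as [|[|[|j]]]; try discriminate;
  inversion H1; inversion H2; subst; simpl; lia.
Qed.

Lemma child_le (t c : tree) (i : nat) : child t i = Some c -> (weight c <= weight t)%nat.
Proof.
  destruct t as [|a b d]; simpl; [discriminate|].
  destruct i as [|[|[|i]]]; intro H; inversion H; subst; simpl; lia.
Qed.

Lemma subtree_app (t : tree) (q : list nat) (i : nat) (D : tree) :
  subtree_at t (q ++ [i]) = Some D ->
  exists P, subtree_at t q = Some P /\ child P i = Some D.
Proof.
  revert t; induction q as [|k q IH]; intros t H; simpl in *.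
  - destruct (child t i) eqn:E; [inversion H; subst; eauto | discriminate].
  - destruct (child t k) eqn:E; [|discriminate]. apply IH; auto.
Qed.

Lemma key (n : nat) (alpha : R) (P D1 D2 : tree) (i j : nat) :
  i <> j -> child P i = Some D1 -> child P j = Some D2 ->
  thr n alpha <= INR (weight D1) -> thr n alpha <= INR (weight D2) ->
  forall q t isroot ancw,
  subtree_at t q = Some P ->
  Forall (fun w' => (weight t <= w')%nat) ancw ->
  hub_aux n alpha t isroot ancw (q ++ [i]) = true.
Proof.
  intros Hij H1 H2 h1 h2 q.
  induction q as [|k q IH]; intros t isroot ancw Hs Hf; simpl in *.
  - inversion Hs; subst. rewrite H1. simpl.
    pose proof (child_two _ _ _ _ _ Hij H1 H2) as Hw.
    assert (Hf' : Forall (fun w' => (weight P <= w')%nat)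
       (if (isroot || hubcondb n alpha ancw (weight P))%bool then weight P :: ancw else ancw)).
    { destruct (isroot || hubcondb n alpha ancw (weight P))%bool; auto. }
    revert Hf'. generalize (if (isroot || hubcondb n alpha ancw (weight P))%bool then weight P :: ancw else ancw).
    intros l Hl.
    unfold hubcondb. apply andb_true_intro; split.
    + unfold Rleb; destruct (Rle_dec _ _); auto.
    + apply forallb_forall. intros x Hx.
      rewrite Forall_forall in Hl. specialize (Hl x Hx).
      unfold Rleb; destruct (Rle_dec _ _) as [|C]; auto. exfalso; apply C.
      assert (Hn : (weight D1 + weight D2 <= x)%nat) by lia.
      apply le_INR in Hn. rewrite plus_INR in Hn. lra.
  - destruct (child t k) eqn:E; [|discriminate].
    apply IH; auto.
    pose proof (child_le _ _ _ E).
    destruct (isroot || hubcondb n alpha ancw (weight t))%bool.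
    + constructor; [lia|]. eapply Forall_impl; [|exact Hf]. simpl; intros; lia.
    + eapply Forall_impl; [|exact Hf]. simpl; intros; lia.
Qed.

Theorem lemma1 (alpha : R) (T : tree) (q : list nat) (i j : nat) (D1 D2 : tree) :
  0 < alpha <= 1 ->
  i <> j ->
  subtree_at T (q ++ [i]) = Some D1 ->
  subtree_at T (q ++ [j]) = Some D2 ->
  heavy (nverts T) alpha D1 ->
  heavy (nverts T) alpha D2 ->
  is_hub alpha T (q ++ [i]) /\ is_hub alpha T (q ++ [j]).
Proof.
  intros _ Hij E1 E2 h1 h2.
  destruct (subtree_app _ _ _ _ E1) as [P [HP C1]].
  destruct (subtree_app _ _ _ _ E2) as [P' [HP' C2]].
  rewrite HP in HP'; inversion HP'; subst P'.
  unfold is_hub, heavy in *; split.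
  - eapply (key _ _ P D1 D2 i j); eauto.
  - eapply (key _ _ P D2 D1 j i); eauto.
Qed.
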